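(* For every base $b\ge 2$ there exist infinitely many $b$-wMRH numbers, and infinitely many distinct integers $A\ge 0$ that occur as multiplicative extra terms of some $b$-wMRH number.
   Context: Fix a base $b\ge 2$. $s_b(N)$ is the sum of the base-$b$ digits of $N$. For a positive integer $X$, its reversal $X^R$ is the integer whose base-$b$ representation is that of $X$ written in reverse order (leading zeros of the result are dropped). A positive integer $N$ is a $b$-wMRH number if there exists an integer $A\ge 0$, called a multiplicative extra term of $N$, such that $N=(A+s_b(N))\cdot(A+s_b(N))^R$. *)

(* Defs.v *)
From mathcomp Require Import all_boot.
Set Implicit Arguments. Unset Strict Implicit. Unset Printing Implicit Defensive.

(* Base-b digits of n, least significant first (empty list for n = 0).
   Fuel n suffices since n %/ b < n for b >= 2, n > 0. *)
Fixpoint digits_aux (b fuel n : nat) : seq nat :=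
  match fuel with
  | 0 => [::]
  | fuel'.+1 => if n == 0 then [::] else n %% b :: digits_aux b fuel' (n %/ b)
  end.

Definition digits (b n : nat) : seq nat := digits_aux b n n.

Definition digsum (b n : nat) : nat := sumn (digits b n).

(* X^R: the integer whose base-b representation is that of X reversed;
   i.e. reading the little-endian digit list as a big-endian one
   (leading zeros of the result are automatically dropped). *)
Definition rev_num (b n : nat) : nat :=
  foldl (fun acc d => acc * b + d) 0 (digits b n).

Definition mult_extra_term (b N A : nat) : Prop :=
  N = (A + digsum b N) * rev_num b (A + digsum b N).

Definition wMRH (b N : nat) : Prop :=
  0 < N /\ exists A : nat, mult_extra_term b N A.

Example ex1 : digits 10 1230 = [:: 0; 3; 2; 1]. Proof. by []. Qed.
Example ex2 : rev_num 10 1230 = 321. Proof. by []. Qed.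
Example ex3 : digsum 2 6 = 2. Proof. by []. Qed.

(* Main.v *)
Require Import Defs.
From mathcomp Require Import all_boot.

Lemma digits_pow (b : nat) (hb : 2 <= b) k fuel :
  k < fuel -> digits_aux b fuel (b ^ k) = nseq k 0 ++ [:: 1].
Proof.
case: b hb => [|[|b]] // _.
elim: k fuel => [|k IH] [|f] //= Hk.
  rewrite expn0 /= modn_small // divn_small //; by case: f {Hk}.
rewrite expnS muln_eq0 expn_eq0 /=.
by rewrite modnMr mulKn ?IH.
Qed.

Lemma foldl_nseq0 b k : foldl (fun acc d => acc * b + d) 0 (nseq k 0) = 0.
Proof. by elim: k. Qed.

Lemma key (b : nat) (hb : 2 <= b) k :
  digsum b (b ^ k) = 1 /\ rev_num b (b ^ k) = 1.
Proof.
have Hd : digits b (b ^ k) = nseq k 0 ++ [:: 1].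
  by rewrite /digits digits_pow // ltn_expl.
rewrite /digsum /rev_num Hd sumn_cat foldl_cat foldl_nseq0 /=.
split => //. by rewrite sumn_nseq ?muln0 ?mul0n.
Qed.

Theorem proposition17 (b : nat) (hb : 2 <= b) :
  (forall m : nat, exists N : nat, m < N /\ wMRH b N) /\
  (forall m : nat, exists A : nat, m < A /\ exists N : nat, wMRH b N /\ mult_extra_term b N A).
Proof.
have Hm : forall m, m.+1 < b ^ m.+1 by move=> m; rewrite ltn_expl.
have Hx : forall k, mult_extra_term b (b ^ k) (b ^ k - 1).
  move=> k; rewrite /mult_extra_term; have [-> _] := @key b hb k.
  rewrite subnK ?expn_gt0 ?(ltnW hb) //.
  by have [_ ->] := @key b hb k; rewrite muln1.
have Hw : forall k, wMRH b (b ^ k).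
  move=> k; split; first by rewrite expn_gt0 (ltnW hb).
  by exists (b ^ k - 1).
split => m.
  exists (b ^ m.+1); split => //; exact: ltn_trans (Hm m).
exists (b ^ m.+1 - 1); split; last by exists (b ^ m.+1).
by rewrite ltn_subRL add1n Hm.
Qed.
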